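(* Let $b'>b>1$. For every instance, the partially naive (pessimistic) agent with true bias $b$ and believed bias $b'$ satisfies $C_p(s)\le b'\cdot C_o(s)$; that is, its cost ratio is at most $b'$.
   Context: An instance is a finite directed acyclic graph $G=(V,E)$ with nonnegative edge costs $c(u,v)$, start node $s$ and target node $t$, where $t$ is the unique node with no outgoing edges; $C_o(u)$ is the minimum cost of a $u$–$t$ path. The sophisticated agent with bias $b'$ is defined by $C_s'(t)=0$ and, for $u\ne t$, $S_s'(u)\in\arg\min_{v:(u,v)\in E}(b'\,c(u,v)+C_s'(v))$, $C_s'(u)=c(u,S_s'(u))+C_s'(S_s'(u))$. The partially naive agent with true bias $b$ and believed bias $b'$: $C_p(t)=0$, and for $u\neq t$, $S_p(u)\in\arg\min_{v:(u,v)\in E}(b\,c(u,v)+C_s'(v))$, $C_p(u)=c(u,S_p(u))+C_p(S_p(u))$; its incurred cost is $C_p(s)$, and its cost ratio is $C_p(s)/C_o(s)$. *)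

(* Defs.v *)
From mathcomp Require Import all_boot all_order all_algebra.
Set Implicit Arguments. Unset Strict Implicit. Unset Printing Implicit Defensive.
Import Order.TTheory GRing.Theory Num.Theory.
Local Open Scope ring_scope.

Fixpoint path_cost (R : numDomainType) (V : Type) (c : V -> V -> R)
    (x : V) (p : seq V) : R :=
  match p with
  | [::] => 0
  | y :: p' => c x y + path_cost c y p'
  end.

Definition acyclic (V : eqType) (E : rel V) : Prop :=
  forall u (p : seq V), path E u p -> last u p = u -> p = [::].

Definition unique_sink (V : finType) (E : rel V) (t : V) : Prop :=
  forall u, (forall v, ~~ E u v) <-> u = t.

Definition instance (R : numDomainType) (V : finType) (E : rel V)
    (c : V -> V -> R) (t : V) : Prop :=
  [/\ acyclic E, unique_sink E t & forall u v, E u v -> 0 <= c u v].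

Definition min_path_cost (R : numDomainType) (V : eqType) (E : rel V)
    (c : V -> V -> R) (t u : V) (x : R) : Prop :=
  (exists p : seq V, [/\ path E u p, last u p = t & path_cost c u p = x]) /\
  (forall p : seq V, path E u p -> last u p = t -> x <= path_cost c u p).

Definition sophisticated (R : numDomainType) (V : eqType) (E : rel V)
    (c : V -> V -> R) (t : V) (b' : R) (S : V -> V) (C : V -> R) : Prop :=
  C t = 0 /\
  forall u, u != t ->
    [/\ E u (S u),
        (forall v, E u v -> b' * c u (S u) + C (S u) <= b' * c u v + C v)
      & C u = c u (S u) + C (S u)].

(* (Sp, Cp) is the partially naive agent with true bias b, planning against
   the sophisticated cost-to-go Cs (computed with believed bias b'). *)
Definition partially_naive (R : numDomainType) (V : eqType) (E : rel V)
    (c : V -> V -> R) (t : V) (b : R) (Cs : V -> R)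
    (Sp : V -> V) (Cp : V -> R) : Prop :=
  Cp t = 0 /\
  forall u, u != t ->
    [/\ E u (Sp u),
        (forall v, E u v -> b * c u (Sp u) + Cs (Sp u) <= b * c u v + Cs v)
      & Cp u = c u (Sp u) + Cp (Sp u)].

(* Main.v *)
Require Import Defs.
From mathcomp Require Import all_boot all_order all_algebra.
From mathcomp Require Import ring lra.
Import Order.TTheory GRing.Theory Num.Theory.
Local Open Scope ring_scope.

Theorem claim6 (R : realFieldType) (b b' : R) (V : finType) (E : rel V)
    (c : V -> V -> R) (s t : V)
    (Ss : V -> V) (Cs : V -> R) (Sp : V -> V) (Cp : V -> R) (Co_s : R) :
  1 < b -> b < b' ->
  instance E c t ->
  sophisticated E c t b' Ss Cs ->
  partially_naive E c t b Cs Sp Cp ->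
  min_path_cost E c t s Co_s ->
  Cp s <= b' * Co_s.
Proof.
move=> hb hbb [acy sink cpos] [Cst HS] [Cpt HP] [[p [pp pl pc]] _].
have tno : forall v, ~~ E t v by apply/sink.
pose Phi u := if u == t then 0 else b' * c u (Ss u) + Cs (Ss u).
have A : forall u, Cs u <= Phi u.
  move=> u; rewrite /Phi; case: eqP => [->|/eqP ne]; first by rewrite Cst.
  have [e _ ->] := HS u ne; have := cpos _ _ e; nra.
have B : forall q u, path E u q -> last u q = t -> Phi u <= b' * path_cost c u q.
  elim=> [|y q IH] u /=; first by move=> _ ->; rewrite /Phi eqxx mulr0.
  case/andP=> e pq lq.
  have ne : u != t by apply/eqP=> ut; move: (tno y); rewrite -ut e.
  have [_ hm _] := HS u ne.
  have := IH y pq lq; have := A y; have := hm y e.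
  rewrite /Phi (negbTE ne); nra.
suff C : Cp s <= Cs s.
  have := B p s pp pl; have := A s; rewrite pc; lra.
pose f x := if x == t then t else Sp x.
have ft : forall k, iter k f t = t by elim=> //= k ->; rewrite /f eqxx.
have D : forall x, Cp x - Cs x <= Cp (f x) - Cs (f x).
  move=> x; rewrite /f; case: eqP => [->|/eqP ne]; first lra.
  have [e1 m1 e2] := HP x ne; have [e3 m2 e4] := HS x ne.
  have h1 := m1 _ e3; have h2 := m2 _ e1.
  rewrite e2 e4.
  have pr : (b' - b) * (c x (Ss x) - c x (Sp x)) <= 0.
    rewrite mulrBl !mulrBr; lra.
  have cle : c x (Ss x) <= c x (Sp x).
    rewrite leNgt; apply/negP => lt.
    have : 0 < (b' - b) * (c x (Ss x) - c x (Sp x)) by apply: mulr_gt0; rewrite subr_gt0.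
    lra.
  have pr2 : (b - 1) * (c x (Ss x) - c x (Sp x)) <= 0.
    by apply: mulr_ge0_le0; rewrite ?subr_ge0 ?subr_le0 // ltW.
  move: pr2; rewrite mulrBl !mulrBr mul1r; lra.
have Dn : forall k x, Cp x - Cs x <= Cp (iter k f x) - Cs (iter k f x).
  elim=> [|k IH] x; first exact: lexx.
  rewrite iterSr; apply: le_trans (IH (f x)); exact: D.
have pathl : forall k x, iter k f x != t -> path E x (traject f (f x) k).
  elim=> [|k IH] x ne; first by [].
  have xt : x != t by apply: contraNneq ne => ->; rewrite ft.
  rewrite iterSr in ne.
  have [e _ _] := HP x xt.
  have fx : f x = Sp x by rewrite /f (negbTE xt).
  rewrite [traject _ _ _]/=; apply/andP; split; first by rewrite fx.
  exact: IH.
have [n hn] : exists n, iter n f s = t.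
  pose g (i : 'I_(#|V|.+1)) := iter i f s.
  have : ~~ injectiveb g.
    apply/negP => /injectiveP inj; have := leq_card g inj.
    by rewrite card_ord ltnn.
  case/injectivePn => i [j ne eqg].
  have loop : forall i j : 'I_(#|V|.+1), (i < j)%N -> g i = g j -> exists n, iter n f s = t.
    move=> i' j' lt eq; exists i'; apply/eqP; apply/negP => /negP nx.
    rewrite /g /= in eq.
    have eqx : iter (j' - i') f (iter i' f s) = iter i' f s.
      rewrite -iterD (subnK (ltnW lt)); exact: esym eq.
    have nx2 : iter (j' - i') f (iter i' f s) != t by rewrite eqx.
    have := acy _ _ (pathl _ _ nx2); rewrite last_traject eqx => /(_ erefl).
    move/(congr1 size); rewrite size_traject => h.
    by move: lt; rewrite -subn_gt0 h.
  case: (ltngtP (val i) (val j)) => [lt|lt|/val_inj h]; first exact: loop eqg.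
  - exact: loop lt (esym eqg).
  - by rewrite h eqxx in ne.
have := Dn n s; rewrite hn Cpt; have := Cst; lra.
Qed.
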